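(* With notation as in the context (type $E_7$), let $\alpha$ be a positive root of $E_7$ with $\alpha\notin\Delta_7^+$, let $s\in\{1,3,4,5,6,7\}$ and let $\beta\in\Delta_s^+$. Then $f(\beta)\oplus f(\alpha)\in\Gamma_s^+$ if and only if $\beta+\alpha\in\Delta_s^+$ or $\beta-\alpha\in\Delta_s^+$.
   Context: Let $F=\{0,1,2,3\}$ be the group $\mathbb{Z}/2\times\mathbb{Z}/2$ with operation $\oplus$ (binary addition without carry) and symplectic form $(a|a')=0$ if $a=0$, $a'=0$ or $a=a'$, and $1$ otherwise. Let $V=F^3$ (elements written $abc$), with coordinatewise $\oplus$ and form $(abc|a'b'c')=(a|a')+(b|b')+(c|c')\in\mathbb{Z}/2$. Let $\Delta$ be the $E_7$ root system with simple roots $\alpha_1,\dots,\alpha_7$, $\langle\alpha_i,\alpha_i\rangle=2$, $\langle\alpha_i,\alpha_j\rangle=-1$ for $\{i,j\}\in\{\{1,3\},\{3,4\},\{4,5\},\{5,6\},\{6,7\},\{2,4\}\}$, $0$ otherwise; $\Lambda=\bigoplus\mathbb{Z}\alpha_i$, $\Delta^+$ the positive roots. Let $f:\Lambda\to V$ be the homomorphism with $f(\alpha_1)=100$, $f(\alpha_2)=030$, $f(\alpha_3)=300$, $f(\alpha_4)=111$, $f(\alpha_5)=003$, $f(\alpha_6)=001$, $f(\alpha_7)=033$. For $\beta=\sum\beta^i\alpha_i\in\Delta^+$ let $m(\beta)=\max\{i:\beta^i\ne0\}$; set $\Delta_1^+=\{\alpha_1\}$, $\Delta_3^+=\{\beta: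 m(\beta)\in\{2,3\}\}$, $\Delta_s^+=\{\beta: m(\beta)=s\}$ for $s=4,\dots,7$, and $\Gamma_s^+=f(\Delta_s^+)$. *)

(* Defs.v *)
From mathcomp Require Import all_boot all_order all_algebra.
Set Implicit Arguments. Unset Strict Implicit. Unset Printing Implicit Defensive.
Import GRing.Theory Num.Theory.
Local Open Scope ring_scope.

(* Root lattice Lambda of E7: coefficient vectors w.r.t. simple roots.
   Index i : 'I_7 (0-based) corresponds to alpha_{i+1}. *)
Definition lat := {ffun 'I_7 -> int}.

Definition simple (i : 'I_7) : lat := [ffun j => if j == i then 1 else 0].

(* adjacency in the E7 Dynkin diagram (1-based pairs
   {1,3},{3,4},{4,5},{5,6},{6,7},{2,4}) *)
Definition adj (i j : nat) : bool :=
  ((i, j) \in [:: (0,2); (2,3); (3,4); (4,5); (5,6); (1,3)])%N ||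
  ((j, i) \in [:: (0,2); (2,3); (3,4); (4,5); (5,6); (1,3)])%N.

Definition cartan (i j : 'I_7) : int :=
  if i == j then 2 else if adj i j then -1 else 0.

Definition form (a b : lat) : int := \sum_(i < 7) \sum_(j < 7) a i * b j * cartan i j.

(* positive roots of E7: nonzero nonnegative lattice vectors of norm 2
   (in a simply-laced root system the roots are exactly the norm-2
   vectors of the root lattice) *)
Definition pos_root (b : lat) : bool :=
  [forall i, 0 <= b i] && (b != 0) && (form b b == 2).

Definition mroot (b : lat) : nat := (\max_(i < 7 | b i != 0) i.+1)%N.

Definition Delta (s : nat) (b : lat) : bool :=
  pos_root b &&
  (if s == 1%N then b == simple ord0
   else if s == 3%N then (mroot b == 2%N) || (mroot b == 3%N)
   else mroot b == s).

(* F = Z/2 x Z/2 ; element written in binary: 0=(0,0),1=(0,1),2=(1,0),3=(1,1);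
   (+) = binary addition without carry = coordinatewise xor *)
Definition F := (bool * bool)%type.
Definition F0 : F := (false, false).
Definition F1 : F := (false, true).
Definition F2 : F := (true, false).
Definition F3 : F := (true, true).
Definition Fxor (a b : F) : F := (xorb a.1 b.1, xorb a.2 b.2).

Definition V := (F * F * F)%type.
Definition V0 : V := (F0, F0, F0).
Definition Vxor (u v : V) : V :=
  (Fxor u.1.1 v.1.1, Fxor u.1.2 v.1.2, Fxor u.2 v.2).

Definition fsimple (i : 'I_7) : V :=
  match nat_of_ord i with
  | 0 => (F1, F0, F0)
  | 1 => (F0, F3, F0)
  | 2 => (F3, F0, F0)
  | 3 => (F1, F1, F1)
  | 4 => (F0, F0, F3)
  | 5 => (F0, F0, F1)
  | _ => (F0, F3, F3)
  end%N.

(* the homomorphism f : Lambda -> V (V has exponent 2, so only parities matter) *)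
Definition f (b : lat) : V :=
  \big[Vxor/V0]_(i < 7) (if odd `|b i|%N then fsimple i else V0).

Definition Gamma (s : nat) (v : V) : Prop := exists g : lat, Delta s g /\ f g = v.

Definition latadd (a b : lat) : lat := [ffun i => a i + b i].
Definition latsub (a b : lat) : lat := [ffun i => a i - b i].

(* Main.v *)
Require Import Defs.
From mathcomp Require Import all_boot all_order all_algebra.
From mathcomp Require Import zify ring lra.
Set Implicit Arguments. Unset Strict Implicit. Unset Printing Implicit Defensive.
Import GRing.Theory Num.Theory.
Local Open Scope ring_scope.

Lemma mulr_ge0_sq (x : int) : 0 <= x * x.
Proof. by rewrite -expr2 sqr_ge0. Qed.

Definition formP (x0 x1 x2 x3 x4 x5 x6 : int) : int :=
  2 * (x0*x0 + x1*x1 + x2*x2 + x3*x3 + x4*x4 + x5*x5 + x6*x6)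
  - 2 * (x0*x2 + x2*x3 + x3*x4 + x4*x5 + x5*x6 + x1*x3).
Lemma bnd0 (x0 x1 x2 x3 x4 x5 x6 : int) : formP x0 x1 x2 x3 x4 x5 x6 = 2 -> 0 <= x0 -> x0 <= 2.
Proof. rewrite /formP => H Hx.
have h0 : 0 <= ((2)*x1 + (-1)*x3) * ((2)*x1 + (-1)*x3) := mulr_ge0_sq _.
have h1 : 0 <= ((-1)*x0 + (2)*x2 + (-1)*x3) * ((-1)*x0 + (2)*x2 + (-1)*x3) := mulr_ge0_sq _.
have h2 : 0 <= ((-1)*x0 + (2)*x3 + (-2)*x4) * ((-1)*x0 + (2)*x3 + (-2)*x4) := mulr_ge0_sq _.
have h3 : 0 <= ((-1)*x0 + (2)*x4 + (-2)*x5) * ((-1)*x0 + (2)*x4 + (-2)*x5) := mulr_ge0_sq _.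
have h4 : 0 <= ((-1)*x0 + (2)*x5 + (-2)*x6) * ((-1)*x0 + (2)*x5 + (-2)*x6) := mulr_ge0_sq _.
have h5 : 0 <= ((-1)*x0 + (2)*x6) * ((-1)*x0 + (2)*x6) := mulr_ge0_sq _.
nia. Qed.
Lemma bnd1 (x0 x1 x2 x3 x4 x5 x6 : int) : formP x0 x1 x2 x3 x4 x5 x6 = 2 -> 0 <= x1 -> x1 <= 2.
Proof. rewrite /formP => H Hx.
have h0 : 0 <= ((2)*x0 + (-1)*x2) * ((2)*x0 + (-1)*x2) := mulr_ge0_sq _.
have h1 : 0 <= ((3)*x2 + (-2)*x3) * ((3)*x2 + (-2)*x3) := mulr_ge0_sq _.
have h2 : 0 <= ((-3)*x1 + (4)*x3 + (-3)*x4) * ((-3)*x1 + (4)*x3 + (-3)*x4) := mulr_ge0_sq _.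
have h3 : 0 <= ((-3)*x1 + (5)*x4 + (-4)*x5) * ((-3)*x1 + (5)*x4 + (-4)*x5) := mulr_ge0_sq _.
have h4 : 0 <= ((-3)*x1 + (6)*x5 + (-5)*x6) * ((-3)*x1 + (6)*x5 + (-5)*x6) := mulr_ge0_sq _.
have h5 : 0 <= ((-3)*x1 + (7)*x6) * ((-3)*x1 + (7)*x6) := mulr_ge0_sq _.
nia. Qed.
Lemma bnd2 (x0 x1 x2 x3 x4 x5 x6 : int) : formP x0 x1 x2 x3 x4 x5 x6 = 2 -> 0 <= x2 -> x2 <= 3.
Proof. rewrite /formP => H Hx.
have h0 : 0 <= ((2)*x0 + (-1)*x2) * ((2)*x0 + (-1)*x2) := mulr_ge0_sq _.
have h1 : 0 <= ((2)*x1 + (-1)*x3) * ((2)*x1 + (-1)*x3) := mulr_ge0_sq _.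
have h2 : 0 <= ((-2)*x2 + (3)*x3 + (-2)*x4) * ((-2)*x2 + (3)*x3 + (-2)*x4) := mulr_ge0_sq _.
have h3 : 0 <= ((-2)*x2 + (4)*x4 + (-3)*x5) * ((-2)*x2 + (4)*x4 + (-3)*x5) := mulr_ge0_sq _.
have h4 : 0 <= ((-2)*x2 + (5)*x5 + (-4)*x6) * ((-2)*x2 + (5)*x5 + (-4)*x6) := mulr_ge0_sq _.
have h5 : 0 <= ((-1)*x2 + (3)*x6) * ((-1)*x2 + (3)*x6) := mulr_ge0_sq _.
nia. Qed.
Lemma bnd3 (x0 x1 x2 x3 x4 x5 x6 : int) : formP x0 x1 x2 x3 x4 x5 x6 = 2 -> 0 <= x3 -> x3 <= 4.
Proof. rewrite /formP => H Hx.
have h0 : 0 <= ((2)*x0 + (-1)*x2) * ((2)*x0 + (-1)*x2) := mulr_ge0_sq _.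
have h1 : 0 <= ((2)*x1 + (-1)*x3) * ((2)*x1 + (-1)*x3) := mulr_ge0_sq _.
have h2 : 0 <= ((3)*x2 + (-2)*x3) * ((3)*x2 + (-2)*x3) := mulr_ge0_sq _.
have h3 : 0 <= ((-1)*x3 + (2)*x4 + (-1)*x5) * ((-1)*x3 + (2)*x4 + (-1)*x5) := mulr_ge0_sq _.
have h4 : 0 <= ((-1)*x3 + (3)*x5 + (-2)*x6) * ((-1)*x3 + (3)*x5 + (-2)*x6) := mulr_ge0_sq _.
have h5 : 0 <= ((-1)*x3 + (4)*x6) * ((-1)*x3 + (4)*x6) := mulr_ge0_sq _.
nia. Qed.
Lemma bnd4 (x0 x1 x2 x3 x4 x5 x6 : int) : formP x0 x1 x2 x3 x4 x5 x6 = 2 -> 0 <= x4 -> x4 <= 3.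
Proof. rewrite /formP => H Hx.
have h0 : 0 <= ((2)*x0 + (-1)*x2) * ((2)*x0 + (-1)*x2) := mulr_ge0_sq _.
have h1 : 0 <= ((2)*x1 + (-1)*x3) * ((2)*x1 + (-1)*x3) := mulr_ge0_sq _.
have h2 : 0 <= ((3)*x2 + (-2)*x3) * ((3)*x2 + (-2)*x3) := mulr_ge0_sq _.
have h3 : 0 <= ((5)*x3 + (-6)*x4) * ((5)*x3 + (-6)*x4) := mulr_ge0_sq _.
have h4 : 0 <= ((-1)*x4 + (2)*x5 + (-1)*x6) * ((-1)*x4 + (2)*x5 + (-1)*x6) := mulr_ge0_sq _.
have h5 : 0 <= ((-1)*x4 + (3)*x6) * ((-1)*x4 + (3)*x6) := mulr_ge0_sq _.
nia. Qed.
Lemma bnd5 (x0 x1 x2 x3 x4 x5 x6 : int) : formP x0 x1 x2 x3 x4 x5 x6 = 2 -> 0 <= x5 -> x5 <= 2.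
Proof. rewrite /formP => H Hx.
have h0 : 0 <= ((2)*x0 + (-1)*x2) * ((2)*x0 + (-1)*x2) := mulr_ge0_sq _.
have h1 : 0 <= ((2)*x1 + (-1)*x3) * ((2)*x1 + (-1)*x3) := mulr_ge0_sq _.
have h2 : 0 <= ((3)*x2 + (-2)*x3) * ((3)*x2 + (-2)*x3) := mulr_ge0_sq _.
have h3 : 0 <= ((5)*x3 + (-6)*x4) * ((5)*x3 + (-6)*x4) := mulr_ge0_sq _.
have h4 : 0 <= ((4)*x4 + (-5)*x5) * ((4)*x4 + (-5)*x5) := mulr_ge0_sq _.
have h5 : 0 <= ((-1)*x5 + (2)*x6) * ((-1)*x5 + (2)*x6) := mulr_ge0_sq _.
nia. Qed.
Lemma bnd6 (x0 x1 x2 x3 x4 x5 x6 : int) : formP x0 x1 x2 x3 x4 x5 x6 = 2 -> 0 <= x6 -> x6 <= 1.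
Proof. rewrite /formP => H Hx.
have h0 : 0 <= ((2)*x0 + (-1)*x2) * ((2)*x0 + (-1)*x2) := mulr_ge0_sq _.
have h1 : 0 <= ((2)*x1 + (-1)*x3) * ((2)*x1 + (-1)*x3) := mulr_ge0_sq _.
have h2 : 0 <= ((3)*x2 + (-2)*x3) * ((3)*x2 + (-2)*x3) := mulr_ge0_sq _.
have h3 : 0 <= ((5)*x3 + (-6)*x4) * ((5)*x3 + (-6)*x4) := mulr_ge0_sq _.
have h4 : 0 <= ((4)*x4 + (-5)*x5) * ((4)*x4 + (-5)*x5) := mulr_ge0_sq _.
have h5 : 0 <= ((3)*x5 + (-4)*x6) * ((3)*x5 + (-4)*x6) := mulr_ge0_sq _.
nia. Qed.
Definition bn (b : lat) (k : nat) : int := b (inord k).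
Lemma bnE (b : lat) (i : 'I_7) : b i = bn b i. Proof. by rewrite /bn inord_val. Qed.
Definition I7 : seq nat := [:: 0; 1; 2; 3; 4; 5; 6]%N.
Definition cv (b : lat) : seq int := map (bn b) I7.
Definition nt (v : seq int) (k : nat) : int := nth 0 v k.

Lemma big7 (R : Type) (op : R -> R -> R) (x : R) (P : pred nat) (F : nat -> R) :
  \big[op/x]_(i < 7 | P i) F i = \big[op/x]_(i <- I7 | P i) F i.
Proof. by rewrite -big_mkord. Qed.

Definition cT (i j : nat) : int :=
  if i == j then 2 else if adj i j then -1 else 0.
Lemma cartanE (i j : 'I_7) : cartan i j = cT i j.
Proof. by []. Qed.

Definition formL (v : seq int) : int :=
  formP (nt v 0) (nt v 1) (nt v 2) (nt v 3) (nt v 4) (nt v 5) (nt v 6).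

Lemma formE (b : lat) : Defs.form b b = formL (cv b).
Proof.
rewrite /Defs.form.
have -> : \sum_(i<7) \sum_(j<7) b i * b j * cartan i j =
  \sum_(i <- I7) \sum_(j <- I7) bn b i * bn b j * cT i j.
  rewrite -(big7 _ _ xpredT (fun i => \sum_(j <- I7) bn b i * bn b j * cT i j)).
  apply: eq_bigr => i _.
  rewrite -(big7 _ _ xpredT (fun j => bn b i * bn b j * cT i j)).
  by apply: eq_bigr => j _; rewrite !bnE cartanE.
rewrite /I7 !big_cons !big_nil /formL /formP /nt /cT /adj /=.
ring.
Qed.

Lemma cv_inj (b c : lat) : cv b = cv c -> b = c.
Proof.
move=> H; apply/ffunP=> i; rewrite !bnE; case: H => *.
by case: i => [[|[|[|[|[|[|[|n]]]]]]] Hi].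
Qed.

Lemma mem_I7 (i : 'I_7) : (nat_of_ord i \in I7).
Proof. by case: i => [[|[|[|[|[|[|[|n]]]]]]] Hi]. Qed.

Lemma cv0 : cv 0 = nseq 7 0.
Proof. by rewrite /cv /bn /= !ffunE. Qed.

Definition posL (v : seq int) : bool :=
  all (fun x => 0 <= x) v && (v != nseq 7 0) && (formL v == 2).

Lemma posE (b : lat) : pos_root b = posL (cv b).
Proof.
rewrite /pos_root /posL formE; congr (_ && _ && _).
- apply/forallP/allP => H.
  + by move=> x /mapP [k _ ->]; rewrite /bn; apply: H.
  + by move=> i; rewrite bnE; apply: H; apply: map_f; apply: mem_I7.
- congr negb; apply/eqP/eqP => [->|H]; first exact: cv0.
  by apply: cv_inj; rewrite H cv0.
Qed.

Definition mrootL (v : seq int) : nat :=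
  foldr (fun i acc => if nt v i != 0 then maxn i.+1 acc else acc) 0%N I7.

Lemma mrootE (b : lat) : mroot b = mrootL (cv b).
Proof.
rewrite /mroot.
rewrite (eq_bigl (fun i : 'I_7 => bn b i != 0)); last by move=> i; rewrite bnE.
rewrite (big7 maxn 0%N (fun i => bn b i != 0) (fun i => i.+1)).
by rewrite /I7 !big_cons big_nil.
Qed.

Definition fsN (n : nat) : V :=
  match n with
  | 0 => (F1, F0, F0)
  | 1 => (F0, F3, F0)
  | 2 => (F3, F0, F0)
  | 3 => (F1, F1, F1)
  | 4 => (F0, F0, F3)
  | 5 => (F0, F0, F1)
  | _ => (F0, F3, F3)
  end%N.

Definition fL (v : seq int) : V :=
  foldr (fun i acc => Vxor (if odd `|nt v i|%N then fsN i else V0) acc) V0 I7.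

Lemma fE (b : lat) : f b = fL (cv b).
Proof.
rewrite /f.
rewrite (eq_bigr (fun i : 'I_7 => if odd `|bn b i|%N then fsN i else V0)); last first.
  by move=> i _; rewrite bnE.
rewrite (big7 Vxor V0 xpredT (fun i => if odd `|bn b i|%N then fsN i else V0)).
by rewrite /I7 !big_cons big_nil.
Qed.

Definition e1 : seq int := [:: 1; 0; 0; 0; 0; 0; 0].

Definition DeltaL (s : nat) (v : seq int) : bool :=
  posL v &&
  (if s == 1%N then v == e1
   else if s == 3%N then (mrootL v == 2%N) || (mrootL v == 3%N)
   else mrootL v == s).

Lemma cv_e1 : cv (simple ord0) = e1.
Proof. by rewrite /cv /bn /simple /= !ffunE -!val_eqE /= !inordK. Qed.

Lemma DeltaE s (b : lat) : Delta s b = DeltaL s (cv b).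
Proof.
rewrite /Delta /DeltaL posE mrootE; congr (_ && _).
case: (s == 1%N) => //.
rewrite -cv_e1; apply/eqP/eqP => [->//|]; exact: cv_inj.
Qed.

Definition addL (v w : seq int) : seq int := map (fun k => nt v k + nt w k) I7.
Definition subL (v w : seq int) : seq int := map (fun k => nt v k - nt w k) I7.

Lemma cv_add a b : cv (latadd a b) = addL (cv a) (cv b).
Proof. by rewrite /cv /bn /= !ffunE. Qed.
Lemma cv_sub a b : cv (latsub a b) = subL (cv a) (cv b).
Proof. by rewrite /cv /bn /= !ffunE. Qed.
Definition rootsL : seq (seq int) := [::[:: 0; 0; 0; 0; 0; 0; 1];
 [:: 0; 0; 0; 0; 0; 1; 0];
 [:: 0; 0; 0; 0; 0; 1; 1];
 [:: 0; 0; 0; 0; 1; 0; 0];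
 [:: 0; 0; 0; 0; 1; 1; 0];
 [:: 0; 0; 0; 0; 1; 1; 1];
 [:: 0; 0; 0; 1; 0; 0; 0];
 [:: 0; 0; 0; 1; 1; 0; 0];
 [:: 0; 0; 0; 1; 1; 1; 0];
 [:: 0; 0; 0; 1; 1; 1; 1];
 [:: 0; 0; 1; 0; 0; 0; 0];
 [:: 0; 0; 1; 1; 0; 0; 0];
 [:: 0; 0; 1; 1; 1; 0; 0];
 [:: 0; 0; 1; 1; 1; 1; 0];
 [:: 0; 0; 1; 1; 1; 1; 1];
 [:: 0; 1; 0; 0; 0; 0; 0];
 [:: 0; 1; 0; 1; 0; 0; 0];
 [:: 0; 1; 0; 1; 1; 0; 0];
 [:: 0; 1; 0; 1; 1; 1; 0];
 [:: 0; 1; 0; 1; 1; 1; 1];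
 [:: 0; 1; 1; 1; 0; 0; 0];
 [:: 0; 1; 1; 1; 1; 0; 0];
 [:: 0; 1; 1; 1; 1; 1; 0];
 [:: 0; 1; 1; 1; 1; 1; 1];
 [:: 0; 1; 1; 2; 1; 0; 0];
 [:: 0; 1; 1; 2; 1; 1; 0];
 [:: 0; 1; 1; 2; 1; 1; 1];
 [:: 0; 1; 1; 2; 2; 1; 0];
 [:: 0; 1; 1; 2; 2; 1; 1];
 [:: 0; 1; 1; 2; 2; 2; 1];
 [:: 1; 0; 0; 0; 0; 0; 0];
 [:: 1; 0; 1; 0; 0; 0; 0];
 [:: 1; 0; 1; 1; 0; 0; 0];
 [:: 1; 0; 1; 1; 1; 0; 0];
 [:: 1; 0; 1; 1; 1; 1; 0];
 [:: 1; 0; 1; 1; 1; 1; 1];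
 [:: 1; 1; 1; 1; 0; 0; 0];
 [:: 1; 1; 1; 1; 1; 0; 0];
 [:: 1; 1; 1; 1; 1; 1; 0];
 [:: 1; 1; 1; 1; 1; 1; 1];
 [:: 1; 1; 1; 2; 1; 0; 0];
 [:: 1; 1; 1; 2; 1; 1; 0];
 [:: 1; 1; 1; 2; 1; 1; 1];
 [:: 1; 1; 1; 2; 2; 1; 0];
 [:: 1; 1; 1; 2; 2; 1; 1];
 [:: 1; 1; 1; 2; 2; 2; 1];
 [:: 1; 1; 2; 2; 1; 0; 0];
 [:: 1; 1; 2; 2; 1; 1; 0];
 [:: 1; 1; 2; 2; 1; 1; 1];
 [:: 1; 1; 2; 2; 2; 1; 0];
 [:: 1; 1; 2; 2; 2; 1; 1];
 [:: 1; 1; 2; 2; 2; 2; 1];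
 [:: 1; 1; 2; 3; 2; 1; 0];
 [:: 1; 1; 2; 3; 2; 1; 1];
 [:: 1; 1; 2; 3; 2; 2; 1];
 [:: 1; 1; 2; 3; 3; 2; 1];
 [:: 1; 2; 2; 3; 2; 1; 0];
 [:: 1; 2; 2; 3; 2; 1; 1];
 [:: 1; 2; 2; 3; 2; 2; 1];
 [:: 1; 2; 2; 3; 3; 2; 1];
 [:: 1; 2; 2; 4; 3; 2; 1];
 [:: 1; 2; 3; 4; 3; 2; 1];
 [:: 2; 2; 3; 4; 3; 2; 1]].

Lemma box_ok :
  all (fun n0 => all (fun n1 => all (fun n2 => all (fun n3 =>
  all (fun n4 => all (fun n5 => all (fun n6 =>
    (formP n0%:Z n1%:Z n2%:Z n3%:Z n4%:Z n5%:Z n6%:Z == 2) ==>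
    ([:: n0%:Z; n1%:Z; n2%:Z; n3%:Z; n4%:Z; n5%:Z; n6%:Z] \in rootsL))
  (iota 0 2)) (iota 0 3)) (iota 0 4)) (iota 0 5)) (iota 0 4)) (iota 0 3)) (iota 0 3).
Proof. by vm_compute. Qed.

Lemma in_iota_le (k n : nat) : (n <= k)%N -> n \in iota 0 k.+1.
Proof. by move=> h; rewrite mem_iota add0n ltnS. Qed.

Lemma box_mem (x0 x1 x2 x3 x4 x5 x6 : int) :
  0 <= x0 -> 0 <= x1 -> 0 <= x2 -> 0 <= x3 -> 0 <= x4 -> 0 <= x5 -> 0 <= x6 ->
  formP x0 x1 x2 x3 x4 x5 x6 = 2 ->
  [:: x0; x1; x2; x3; x4; x5; x6] \in rootsL.
Proof.
move=> h0 h1 h2 h3 h4 h5 h6 H.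
have b0 := bnd0 H h0. have b1 := bnd1 H h1. have b2 := bnd2 H h2.
have b3 := bnd3 H h3. have b4 := bnd4 H h4. have b5 := bnd5 H h5.
have b6 := bnd6 H h6.
move: h0 h1 h2 h3 h4 h5 h6 b0 b1 b2 b3 b4 b5 b6 H.
case: x0 => [n0|//]; case: x1 => [n1|//]; case: x2 => [n2|//];
case: x3 => [n3|//]; case: x4 => [n4|//]; case: x5 => [n5|//];
case: x6 => [n6|//] => _ _ _ _ _ _ _.
rewrite !lez_nat => b0 b1 b2 b3 b4 b5 b6 H.
have := box_ok.
move/allP/(_ n0 (in_iota_le b0))/allP/(_ n1 (in_iota_le b1)).
move/allP/(_ n2 (in_iota_le b2))/allP/(_ n3 (in_iota_le b3)).
move/allP/(_ n4 (in_iota_le b4))/allP/(_ n5 (in_iota_le b5)).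
move/allP/(_ n6 (in_iota_le b6)).
by rewrite H eqxx implyTb.
Qed.

Lemma roots_mem (b : lat) : pos_root b -> cv b \in rootsL.
Proof.
rewrite posE /posL /formL => /andP[/andP[Hn _] /eqP Hf].
have -> : cv b = [:: bn b 0; bn b 1; bn b 2; bn b 3; bn b 4; bn b 5; bn b 6] by [].
move: Hn Hf; rewrite [cv b]/cv [nt _]/nt [map _ _]/= => /and5P[h0 h1 h2 h3 /and4P[h4 h5 h6 _]] Hf.
exact: box_mem.
Qed.

Definition latof (r : seq int) : lat := [ffun i : 'I_7 => nth 0 r i].

Lemma cv_latof r : size r = 7%N -> cv (latof r) = r.
Proof.
move=> hs; rewrite /cv /bn /latof /= !ffunE !inordK //.
by case: r hs => [|? [|? [|? [|? [|? [|? [|? [|]]]]]]]].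
Qed.

Definition GL (s : nat) : seq V := map fL (filter (DeltaL s) rootsL).

Lemma sizes_ok : all (fun r => size r == 7%N) rootsL.
Proof. by vm_compute. Qed.

Lemma GammaE s v : Gamma s v <-> v \in GL s.
Proof.
split.
- case=> g [Hd <-].
  have Hr : cv g \in rootsL by apply: roots_mem; case/andP: Hd.
  rewrite DeltaE in Hd; rewrite fE.
  apply/mapP; exists (cv g); last reflexivity.
  rewrite mem_filter; apply/andP; split; [exact: Hd | exact: Hr].
- rewrite /GL; case/mapP => r; rewrite mem_filter => /andP[Hd Hr] ->.
  have hs : size r = 7%N by apply/eqP; move/allP: sizes_ok; apply.
  by exists (latof r); rewrite DeltaE fE cv_latof.
Qed.

Definition final_check : bool :=
  all (fun s => let G := GL s in
    all (fun ra => all (fun rb =>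
      (~~ DeltaL 7 ra && DeltaL s rb) ==>
      ((Vxor (fL rb) (fL ra) \in G) ==
       (DeltaL s (addL rb ra) || DeltaL s (subL rb ra)))) rootsL) rootsL)
  [:: 1; 3; 4; 5; 6; 7]%N.

Lemma final_ok : final_check.
Proof. vm_compute. reflexivity. Qed.

Theorem mainTheorem11 (alpha beta : lat) (s : nat) :
  (s \in [:: 1; 3; 4; 5; 6; 7])%N ->
  pos_root alpha -> ~~ Delta 7 alpha ->
  Delta s beta ->
  (Gamma s (Vxor (f beta) (f alpha)) <->
   Delta s (latadd beta alpha) \/ Delta s (latsub beta alpha)).
Proof.
move=> Hs Ha Hna Hb.
have Hrb : cv beta \in rootsL by apply: roots_mem; case/andP: Hb.
have Hra : cv alpha \in rootsL by apply: roots_mem.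
rewrite GammaE !DeltaE !fE cv_add cv_sub.
rewrite DeltaE in Hna; rewrite DeltaE in Hb.
move: Hra Hrb Hna Hb.
move: (cv alpha) (cv beta) => ra rb Hra Hrb Hna Hb.
have := final_ok; rewrite /final_check.
move/allP/(_ s Hs).
move/allP/(_ ra Hra)/allP/(_ rb Hrb).
have Hc : ~~ DeltaL 7 ra && DeltaL s rb by apply/andP; split.
move/implyP/(_ Hc)/eqP ->.
by split; move/orP.
Qed.
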